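(* Let $n,q,m\ge1$ and let $S=\{v_1,\dots,v_m\}\subset\mathbb Z^n$ consist of distinct vectors satisfying: (1) $\sum_jn_jv_j\ne0$ for all $n_j\in\mathbb Z$ with $\sum_jn_j=0$ and $1<\sum_j|n_j|\le 2q+2$; (2) $|\sum_jn_jv_j|^2-\sum_jn_j|v_j|^2\ne0$ for all $n_j\in\mathbb Z$ with $\sum_jn_j=1$ and $1<\sum_j|n_j|\le2q+1$; (3) $\pi(u)\ne0$ whenever $u\in\mathbb Z^m$ is an element of $X_q$ or the sum or the difference of two distinct elements of $X_q$; (4) $2\sum_j\ell_j|v_j|^2+|\sum_j\ell_jv_j|^2\ne0$ for all $\ell\in X_q^{-2}$. Substitute into $H_{\rm Res}$ (restricted to $\{u_k=0,\ k\notin\mathrm{Span}(S)\}$) $u_k=z_k$ for $k\in S^c$ and $u_{v_i}=\sqrt{\xi_i+y_i}\,e^{ix_i}$, and expand in powers of $y,w$ (with $y$ of degree 2, $w=(z,\bar z)$ of degree 1, $x$ of degree 0). Then the sum of all terms of degree $\le2$ in $(y,w)$ equals $$\mathrm{const}(\xi)+(q+1)^2A_q(\xi)\Big(\sum_iy_i+\sum_{k\in S^c}|z_k|^2\Big)+N,$$ where $$N=(\omega(\xi),y)+\sum_{k\in S^c}|k|^2|z_k|^2+\mathcal Q(x,w),\qquad \omega(\xi)=\omega_0+\nabla_\xi A_{q+1}(\xi)-(q+1)^2A_q(\xi)\underline1,$$ $\omega_0=(|v_1|^2,\dots,|v_m|^2)$, $\underline1=(1,\dots,1)$, and $$\mathcal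 Q=\sum_{\ell\in X_q^0}c(\ell)e^{i(\ell,x)}\sum_{(h,k)\in\mathcal P_\ell}z_h\bar z_k+\sum_{\ell\in X_q^{-2}}c(\ell)\sum_{\{h,k\}\in\mathcal P_\ell}\big[e^{i(\ell,x)}z_hz_k+e^{-i(\ell,x)}\bar z_h\bar z_k\big],$$ where, writing $\ell=\ell^+-\ell^-$ with $\ell^\pm\in\mathbb N^m$ of disjoint supports and using multi-index notation, $$c(\ell)=(q+1)^2\xi^{\frac{\ell^++\ell^-}{2}}\sum_{\alpha\in\mathbb N^m,\ |\alpha+\ell^+|_1=q}\binom{q}{\ell^++\alpha}\binom{q}{\ell^-+\alpha}\xi^\alpha\quad(\ell\in X_q^0),$$ $$c(\ell)=(q+1)q\,\xi^{\frac{\ell^++\ell^-}{2}}\sum_{\alpha\in\mathbb N^m,\ |\alpha+\ell^+|_1=q-1}\binom{q+1}{\ell^-+\alpha}\binom{q-1}{\ell^++\alpha}\xi^\alpha\quad(\ell\in X_q^{-2}).$$ In particular, all terms of degree exactly $1$ in $w$ vanish (so $S$ is complete).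
   Context: Setting: $H_{\rm Res}=\sum_{k\in\mathbb Z^n}|k|^2u_k\bar u_k+\sum\binom{q+1}{\alpha}\binom{q+1}{\beta}u^\alpha\bar u^\beta$, the second sum over multi-indices $\alpha,\beta:\mathbb Z^n\to\mathbb N$ with $|\alpha|=|\beta|=q+1$, $\sum_k(\alpha_k-\beta_k)k=0$ and $\sum_k(\alpha_k-\beta_k)|k|^2=0$; $\binom{q+1}{\alpha}$ is the multinomial coefficient and $u^\alpha=\prod_ku_k^{\alpha_k}$. $S^c=\mathrm{Span}(S)\setminus S$, with $\mathrm{Span}(S)$ the subgroup of $\mathbb Z^n$ generated by $S$. $A_r(\xi)=\sum_{k\in\mathbb N^m,\ \sum k_i=r}\binom{r}{k_1,\dots,k_m}^2\prod_i\xi_i^{k_i}$. $e_1,\dots,e_m$ standard basis of $\mathbb Z^m$; $\eta(\sum a_ie_i)=\sum a_i$; $\pi:\mathbb Z^m\to\mathbb Z^n$, $\pi(e_i)=v_i$. $X_q$ is the set of $\ell=\sum_{j=1}^{2q}\epsilon_je_{i_j}$ ($\epsilon_j=\pm1$, repetitions allowed) with $\ell\ne0$, $\ell\ne-2e_i$ for all $i$, $\eta(\ell)\in\{0,-2\}$; $X_q^0$, $X_q^{-2}$ are the parts with $\eta=0$, $\eta=-2$. For $\ell\in X_q^0$, $\mathcal P_\ell$ is the set of ordered pairs $(h,k)\in S^c\times S^c$ with $\sum_j\ell_jv_j+h-k=0$ and $\sum_j\ell_j|v_j|^2+|h|^2-|k|^2=0$; for $\ell\in X_q^{-2}$, $\mathcal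 P_\ell$ is the set of unordered pairs $\{h,k\}\subset S^c$ with $\sum_j\ell_jv_j+h+k=0$ and $\sum_j\ell_j|v_j|^2+|h|^2+|k|^2=0$. Here $\xi_i>0$ are parameters, $x\in\mathbb T^m$, $y\in\mathbb C^m$ small. *)

(* Defs.v *)
From HB Require Import structures.
From mathcomp Require Import all_boot all_order all_algebra.
Set Implicit Arguments. Unset Strict Implicit. Unset Printing Implicit Defensive.
Import Order.TTheory GRing.Theory Num.Theory.
Local Open Scope ring_scope.

(* Vectors of Z^n are 'rV[int]_n; elements of Z^m (multi-indices over the
   index set {1..m} of S, e.g. l, n_j, u) are {ffun 'I_m -> int}. *)
Notation mi m := {ffun 'I_m -> int}.

Section Combinatorics.
Variables (n m : nat).
Implicit Types (k h : 'rV[int]_n) (l u : mi m).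

Definition sqnorm k : int := \sum_(j < n) (k 0 j) ^+ 2.

Variable v : 'I_m -> 'rV[int]_n.

Definition piZ u : 'rV[int]_n := \sum_(i < m) v i *~ u i.
Definition wsq u : int := \sum_(i < m) u i * sqnorm (v i).
Definition etaZ u : int := \sum_(i < m) u i.
Definition l1norm u : nat := (\sum_(i < m) `|u i|)%N.

Definition inSpan k := exists c : mi m, k = piZ c.
Definition inSc k := inSpan k /\ forall i, k <> v i.

Definition unitv (i : 'I_m) : mi m := [ffun j => ((i == j) : nat)%:Z].

Definition signed_sum (q : nat) l : bool :=
  [exists idx : {ffun 'I_(2 * q) -> 'I_m},
   exists eps : {ffun 'I_(2 * q) -> bool},
     l == \sum_(j < 2 * q) (if eps j then unitv (idx j) else - unitv (idx j))].

Definition Xq (q : nat) l : bool :=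
  [&& signed_sum q l, l != 0,
      [forall i, l != - (unitv i *+ 2)] &
      (etaZ l == 0) || (etaZ l == -2)].
Definition Xq0 q l : bool := Xq q l && (etaZ l == 0).
Definition Xqm2 q l : bool := Xq q l && (etaZ l == -2).

(* (h,k) in P_l for l in X_q^0 (ordered pair; h,k in S^c assumed separately) *)
Definition P0 l h k : bool :=
  (piZ l + h - k == 0) && (wsq l + sqnorm h - sqnorm k == 0).
Definition Pm2 l h k : bool :=
  (piZ l + h + k == 0) && (wsq l + sqnorm h + sqnorm k == 0).

End Combinatorics.

Section Analysis.
Variables (R : rcfType) (n m : nat) (v : 'I_m -> 'rV[int]_n) (xi : 'I_m -> R).

(* multinomial coefficient binom(r; k_1..k_m) (used only when sum k = r) *)
Definition mnom (r : nat) (k : 'I_m -> nat) : R :=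
  r`!%:R / \prod_(i < m) (k i)`!%:R.

Definition Apol (r : nat) : R :=
  \sum_(k : {ffun 'I_m -> 'I_r.+1} | (\sum_i (k i : nat) == r)%N)
     (mnom r (fun i => k i)) ^+ 2 * \prod_(i < m) xi i ^+ k i.

(* A_r as a univariate polynomial in the variable xi_j, other xi_i fixed *)
Definition Apol_in (r : nat) (j : 'I_m) : {poly R} :=
  \sum_(k : {ffun 'I_m -> 'I_r.+1} | (\sum_i (k i : nat) == r)%N)
     (mnom r (fun i => k i)) ^+ 2 *:
       ((\prod_(i < m | i != j) xi i ^+ k i)%:P * 'X^(k j)).

Definition dApol (r : nat) (j : 'I_m) : R := ((Apol_in r j)^`()).[xi j].

Definition omega (q : nat) (j : 'I_m) : R :=
  (sqnorm (v j))%:~R + dApol q.+1 j - (q.+1 ^ 2)%:R * Apol q.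

Definition lplus (l : mi m) (i : 'I_m) : nat := if 0 <= l i then `|l i|%N else 0%N.
Definition lminus (l : mi m) (i : 'I_m) : nat := if l i < 0 then `|l i|%N else 0%N.

Definition xi_half (l : mi m) : R := \prod_(i < m) Num.sqrt (xi i) ^+ `|l i|%N.

Definition c0 (q : nat) (l : mi m) : R :=
  (q.+1 ^ 2)%:R * xi_half l *
  \sum_(a : {ffun 'I_m -> 'I_q.+1} | (\sum_i (a i + lplus l i) == q)%N)
     mnom q (fun i => lplus l i + a i) * mnom q (fun i => lminus l i + a i)
     * \prod_(i < m) xi i ^+ a i.

Definition cm2 (q : nat) (l : mi m) : R :=
  (q.+1 * q)%:R * xi_half l *
  \sum_(a : {ffun 'I_m -> 'I_q.+1} | (\sum_i (a i + lplus l i) == q.-1)%N)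
     mnom q.+1 (fun i => lminus l i + a i) * mnom q.-1 (fun i => lplus l i + a i)
     * \prod_(i < m) xi i ^+ a i.

(* ---- Coefficients of the substituted Hamiltonian ----
   After substituting u_{v_i} = sqrt(xi_i + y_i) e^{i x_i}, u_k = z_k (k in S^c),
   u_k = 0 (k notin Span S), H_Res becomes a series in the monomials
     e^{i(l,x)} * y^gamma * prod_{h in ea} z_h * prod_{k in eb} zbar_k.
   [coefH q l ea eb yj] is the coefficient of such a monomial with
   y^gamma = 1 (yj = None) or y^gamma = y_j (yj = Some j); ea, eb are the
   lists (multisets) of points of S^c carrying z resp. zbar.
   A term u^alpha ubar^beta contributes with alpha = a on S (alpha_{v_i} = a_i),
   beta_{v_i} = a_i - l_i, and alpha, beta on S^c given by ea, eb; the factor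
   (xi_i+y_i)^{(alpha_{v_i}+beta_{v_i})/2} is Taylor expanded in y_i. *)

Definition multfact (e : seq 'rV[int]_n) : R :=
  \prod_(x <- undup e) (count_mem x e)`!%:R.

(* multinomial binom(q+1; alpha) for alpha = a on S and multiset e on S^c *)
Definition mnomE (r : nat) (a : 'I_m -> nat) (e : seq 'rV[int]_n) : R :=
  r`!%:R / (\prod_(i < m) (a i)`!%:R * multfact e).

Definition coefRes (q : nat) (l : mi m) (ea eb : seq 'rV[int]_n)
    (yj : option 'I_m) : R :=
  \sum_(a : {ffun 'I_m -> 'I_q.+2} |
        [&& [forall i, l i <= (a i : nat)%:Z],
            (\sum_i (a i : nat) + size ea == q.+1)%N,
            \sum_i ((a i : nat)%:Z - l i) + (size eb)%:Z == (q.+1)%:Z,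
            piZ v l + \sum_(h <- ea) h - \sum_(k <- eb) k == 0 &
            wsq v l + \sum_(h <- ea) sqnorm h - \sum_(k <- eb) sqnorm k == 0])
    let b : 'I_m -> nat := fun i => `|(a i : nat)%:Z - l i|%N in
    mnomE q.+1 (fun i => a i) ea * mnomE q.+1 b eb *
    let P := \prod_(i < m) Num.sqrt (xi i) ^+ (a i + b i) in
    match yj with
    | None => P
    | Some j => ((a j + b j)%:R / 2%:R) * P / xi j
    end.

(* contribution of sum_k |k|^2 u_k ubar_k *)
Definition coefQuad (l : mi m) (ea eb : seq 'rV[int]_n) (yj : option 'I_m) : R :=
  if l == 0 then
    match ea, eb, yj with
    | [::], [::], None => \sum_(i < m) (sqnorm (v i))%:~R * xi i
    | [::], [::], Some j => (sqnorm (v j))%:~R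
    | [:: h], [:: k], None => if h == k then (sqnorm h)%:~R else 0
    | _, _, _ => 0
    end
  else 0.

Definition coefH (q : nat) (l : mi m) (ea eb : seq 'rV[int]_n) (yj : option 'I_m) : R :=
  coefQuad l ea eb yj + coefRes q l ea eb yj.

End Analysis.

(* Main.v *)
Require Import Defs.
From HB Require Import structures.
From mathcomp Require Import all_boot all_order all_algebra.
From Stdlib Require Import FunctionalExtensionality.
From mathcomp Require Import zify ring lra.
Import Order.TTheory GRing.Theory Num.Theory.
Local Open Scope ring_scope.
Set Implicit Arguments. Unset Strict Implicit. Unset Printing Implicit Defensive.

Lemma reindex_ff (V : nmodType) (m N1 N2 : nat) (P1 P2 : ('I_m -> nat) -> bool)
  (F1 F2 : ('I_m -> nat) -> V) (h k : ('I_m -> nat) -> ('I_m -> nat)) :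
  (forall f, P2 f -> (forall i, (f i <= N2)%N) ->
     [/\ P1 (h f), k (h f) = f, forall i, (h f i <= N1)%N & F1 (h f) = F2 f]) ->
  (forall g, P1 g -> (forall i, (g i <= N1)%N) ->
     [/\ P2 (k g), h (k g) = g & forall i, (k g i <= N2)%N]) ->
  \sum_(g : {ffun 'I_m -> 'I_N1.+1} | P1 (fun i => g i)) F1 (fun i => g i) =
  \sum_(f : {ffun 'I_m -> 'I_N2.+1} | P2 (fun i => f i)) F2 (fun i => f i).
Proof.
move=> H2 H1.
pose H (f : {ffun 'I_m -> 'I_N2.+1}) : {ffun 'I_m -> 'I_N1.+1} :=
  [ffun i => inord (h (fun i => f i) i)].
pose K (g : {ffun 'I_m -> 'I_N1.+1}) : {ffun 'I_m -> 'I_N2.+1} :=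
  [ffun i => inord (k (fun i => g i) i)].
have bd1 (g : {ffun 'I_m -> 'I_N1.+1}) i : (g i <= N1)%N by rewrite -ltnS.
have bd2 (g : {ffun 'I_m -> 'I_N2.+1}) i : (g i <= N2)%N by rewrite -ltnS.
have vH (f : {ffun 'I_m -> 'I_N2.+1}) : P2 (fun i => f i) -> (fun i => nat_of_ord (H f i)) = h (fun i => f i).
  move=> Pf; apply: functional_extensionality => i; rewrite ffunE inordK //.
  by case: (H2 _ Pf (bd2 f)) => _ _ /(_ i); rewrite ltnS.
have vK (g : {ffun 'I_m -> 'I_N1.+1}) : P1 (fun i => g i) -> (fun i => nat_of_ord (K g i)) = k (fun i => g i).
  move=> Pg; apply: functional_extensionality => i; rewrite ffunE inordK //.
  by case: (H1 _ Pg (bd1 g)) => _ _ /(_ i); rewrite ltnS.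
have ffext N (f g : {ffun 'I_m -> 'I_N}) :
    (fun i => nat_of_ord (f i)) = (fun i => nat_of_ord (g i)) -> f = g.
  move=> e; apply/ffunP => i; apply/val_inj => /=.
  exact: (congr1 (fun F => F i) e).
have pe f : (P1 (fun i => nat_of_ord (H f i)) && (K (H f) == f)) = P2 (fun i => f i).
  case P2f: (P2 (fun i => f i)).
    case: (H2 _ P2f (bd2 f)) => P1h khf _ _.
    rewrite vH // P1h /=; apply/eqP/ffext.
    by rewrite vK vH ?khf //.
  apply/negbTE/negP => /andP [P1h /eqP eK].
  case: (H1 _ P1h (bd1 _)) => P2k _ _.
  by move: P2k; rewrite -vK // eK P2f.
rewrite (reindex_onto H K).
  apply: eq_big => f; first exact: pe.
  rewrite pe => P2f; case: (H2 _ P2f (bd2 f)) => _ _ _ <-.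
  by rewrite vH.
move=> g P1g; apply: ffext.
case: (H1 _ P1g (bd1 g)) => P2k hk _.
by rewrite vH vK // hk.
Qed.

Set Implicit Arguments. Unset Strict Implicit. Unset Printing Implicit Defensive.

Section Basic.
Variables (n m : nat) (v : 'I_m -> 'rV[int]_n).

Lemma piZN l : piZ v (- l) = - piZ v l.
Proof. by rewrite /piZ -sumrN; apply: eq_bigr => i _; rewrite ffunE mulrNz. Qed.
Lemma piZD l1 l2 : piZ v (l1 + l2) = piZ v l1 + piZ v l2.
Proof. by rewrite /piZ -big_split; apply: eq_bigr => i _; rewrite ffunE mulrzDr. Qed.
Lemma piZ0 : piZ v 0 = 0.
Proof. by rewrite /piZ big1 // => i _; rewrite ffunE mulr0z. Qed.
Lemma wsqN l : wsq v (- l) = - wsq v l.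
Proof. by rewrite /wsq -sumrN; apply: eq_bigr => i _; rewrite ffunE mulNr. Qed.
Lemma wsq0 : wsq v 0 = 0.
Proof. by rewrite /wsq big1 // => i _; rewrite ffunE mul0r. Qed.
Lemma etaZN (l : mi m) : etaZ (- l) = - etaZ l.
Proof. by rewrite /etaZ -sumrN; apply: eq_bigr => i _; rewrite ffunE. Qed.
Lemma l1normN (l : mi m) : l1norm (- l) = l1norm l.
Proof. by rewrite /l1norm; apply: eq_bigr => i _; rewrite ffunE abszN. Qed.
Lemma sqnormN (k : 'rV[int]_n) : sqnorm (- k) = sqnorm k.
Proof. by rewrite /sqnorm; apply: eq_bigr => i _; rewrite mxE sqrrN. Qed.

Lemma unitvE (i j : 'I_m) : unitv i j = ((i == j) : nat)%:Z.
Proof. by rewrite ffunE. Qed.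

Lemma l1norm_eta (l : mi m) :
  (l1norm l)%:Z = etaZ l + 2 * (\sum_(i < m) lminus l i)%:Z.
Proof.
rewrite /l1norm /etaZ -!natz !natr_sum mulr_sumr -big_split /=.
apply: eq_bigr => i _; rewrite /lminus; case: ltrP => [lt0|ge0].
  by rewrite natz abszE ltr0_norm //; ring.
by rewrite mulr0 addr0 natz gez0_abs.
Qed.
End Basic.

Lemma sumz (I : Type) (r : seq I) (P : pred I) (F : I -> nat) :
  (\sum_(i <- r | P i) F i)%:Z = \sum_(i <- r | P i) (F i)%:Z.
Proof. by rewrite -natz natr_sum; apply: eq_bigr => i _; rewrite natz. Qed.

Section Res.
Variables (R : rcfType) (n m : nat) (v : 'I_m -> 'rV[int]_n) (xi : 'I_m -> R) (q : nat).

Definition PR (l : mi m) (ea eb : seq 'rV[int]_n) (a : 'I_m -> nat) : bool :=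
  [&& [forall i, l i <= (a i)%:Z], (\sum_i a i + size ea == q.+1)%N,
      \sum_i ((a i)%:Z - l i) + (size eb)%:Z == (q.+1)%:Z,
      piZ v l + \sum_(h <- ea) h - \sum_(k <- eb) k == 0 &
      wsq v l + \sum_(h <- ea) sqnorm h - \sum_(k <- eb) sqnorm k == 0].

Definition BD (l : mi m) (ea eb : seq 'rV[int]_n) (yj : option 'I_m) (a : 'I_m -> nat) : R :=
    let b : 'I_m -> nat := fun i => `|(a i)%:Z - l i|%N in
    mnomE R q.+1 a ea * mnomE R q.+1 b eb *
    let P := \prod_(i < m) Num.sqrt (xi i) ^+ (a i + b i) in
    match yj with
    | None => P
    | Some j => ((a j + b j)%:R / 2%:R) * P / xi j
    end.

Lemma coefResE l ea eb yj : coefRes v xi q l ea eb yj =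
  \sum_(a : {ffun 'I_m -> 'I_q.+2} | PR l ea eb (fun i => a i)) BD l ea eb yj (fun i => a i).
Proof. by []. Qed.

Lemma coefRes0 l ea eb yj : (forall a, PR l ea eb a -> False) -> coefRes v xi q l ea eb yj = 0.
Proof.
move=> H; rewrite coefResE big_pred0 // => a; apply/negP => /H [].
Qed.

Lemma PR_facts l ea eb a : PR l ea eb a ->
  [/\ etaZ l = (size eb)%:Z - (size ea)%:Z,
      (l1norm l + size ea + size eb <= 2 * q.+1)%N,
      piZ v l + \sum_(h <- ea) h - \sum_(k <- eb) k = 0 &
      wsq v l + \sum_(h <- ea) sqnorm h - \sum_(k <- eb) sqnorm k = 0].
Proof.
case/and5P => /forallP la /eqP sa /eqP sb /eqP p /eqP w.
have sa' : \sum_i (a i)%:Z + (size ea)%:Z = (q.+1)%:Z.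
  by rewrite -sumz -sa PoszD.
rewrite sumrB in sb.
split => //.
  rewrite /etaZ; move: sa' sb; set S := \sum_i (a i)%:Z; set E := \sum_i l i; lia.
have : (l1norm l)%:Z <= \sum_i (a i)%:Z + (\sum_i (a i)%:Z - \sum_i l i).
  rewrite -sumrB -big_split /l1norm sumz /=; apply: ler_sum => i _.
  move: (la i); set x := l i; set y := a i; rewrite abszE; lia.
move: sa' sb; set S := \sum_i (a i)%:Z; set E := \sum_i l i; lia.
Qed.
End Res.

Lemma l1norm0 m (l : mi m) : l1norm l = 0%N -> l = 0.
Proof.
move/eqP; rewrite /l1norm sum_nat_eq0 => /forallP H.
apply/ffunP => i; rewrite ffunE; apply/eqP; rewrite -absz_eq0; exact: (H i).
Qed.

Section Main1.
Variables (R : rcfType) (n q m : nat) (v : 'I_m -> 'rV[int]_n) (xi : 'I_m -> R).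
Hypothesis H1 : forall nn : mi m, etaZ nn = 0 -> (1 < l1norm nn <= 2 * q + 2)%N ->
     piZ v nn <> 0.

Lemma res_empty00 l yj : l <> 0 -> coefRes v xi q l [::] [::] yj = 0.
Proof.
move=> l0; apply: coefRes0 => a /PR_facts [eta bd p _].
rewrite !big_nil /= !subr0 !addr0 in eta p.
apply: (H1 eta _ p).
have := l1norm_eta l; rewrite eta add0r => e.
rewrite addn0 addn0 in bd; apply/andP; split; last by rewrite mulnSr in bd; lia.
have : l1norm l <> 0%N by move/l1norm0.
lia.
Qed.
End Main1.

Lemma unit_of_l1 m (u : mi m) : l1norm u = 1%N -> etaZ u = 1 -> exists i, u = unitv i.
Proof.
move=> l1 e1.
have := l1norm_eta u; rewrite l1 e1 => e.
have s0 : (\sum_(i < m) lminus u i = 0)%N.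
  set s := (\sum_(i < m) lminus u i)%N in e *.
  have e' : Posz 1 = 1 + 2 * s%:Z := e.
  clearbody s; clear -e'.
  lia.
have pos i : 0 <= u i.
  move/eqP: s0; rewrite sum_nat_eq0 => /forallP /(_ i) /eqP.
  rewrite /lminus; case: ltrP => // lt0 /eqP; rewrite absz_eq0 => /eqP ui0.
  by move: lt0; rewrite ui0.
have [i ui] : exists i, `|u i|%N != 0%N.
  case: (pickP (fun i => `|u i|%N != 0%N)) => [i ui|none]; first by exists i.
  move: l1; rewrite /l1norm big1 // => i _; apply/eqP; move: (none i) => /= /negbT.
  by rewrite negbK.
exists i.
move: l1; rewrite /l1norm (bigD1 i) //= => l1.
have [rest ui1] : (\sum_(j < m | j != i) `|u j|%N = 0)%N /\ `|u i|%N = 1%N.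
  move: l1 ui; set T := (\sum_(j < m | j != i) _)%N; set A := `|u i|%N.
  clearbody T A; lia.
apply/ffunP => j; rewrite unitvE.
case: (eqVneq i j) => [<-|ne] /=.
  by rewrite -[u i]gez0_abs ?pos // ui1.
move/eqP: rest; rewrite sum_nat_eq0 => /forallP /(_ j); rewrite eq_sym ne /=.
by rewrite absz_eq0 => /eqP.
Qed.

Lemma piZ_unit n m (v : 'I_m -> 'rV[int]_n) i : piZ v (unitv i) = v i.
Proof.
rewrite /piZ (bigD1 i) //= unitvE eqxx mulr1z big1 ?addr0 // => j ne.
by rewrite unitvE eq_sym (negbTE ne) mulr0z.
Qed.

Section Main2.
Variables (R : rcfType) (n q m : nat) (v : 'I_m -> 'rV[int]_n) (xi : 'I_m -> R).
Hypothesis H2 : forall nn : mi m, etaZ nn = 1 -> (1 < l1norm nn <= 2 * q + 1)%N ->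
     sqnorm (piZ v nn) - wsq v nn <> 0.

Lemma deg1_aux (nn : mi m) h : inSc v h -> etaZ nn = 1 -> (l1norm nn <= 2 * q + 1)%N ->
  h = piZ v nn -> sqnorm h - wsq v nn = 0 -> False.
Proof.
move=> [_ hS] e bd hp w.
case: (ltnP 1 (l1norm nn)) => [lt|le].
  by apply: (H2 e _); [rewrite lt bd | rewrite -hp].
have := l1norm_eta nn; rewrite e => e2.
have l1 : l1norm nn = 1%N by lia.
have [i ei] := unit_of_l1 l1 e.
by move: hp; rewrite ei piZ_unit => /hS.
Qed.

Lemma res_deg1 l h yj : inSc v h ->
  coefRes v xi q l [:: h] [::] yj = 0 /\ coefRes v xi q l [::] [:: h] yj = 0.
Proof.
move=> hS; split; apply: coefRes0 => a /PR_facts [eta bd p w];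
  rewrite !big_cons !big_nil /= in eta bd p w.
- rewrite !addr0 !subr0 in p w.
  apply: (deg1_aux (nn := - l) hS).
  + by rewrite etaZN eta sub0r opprK.
  + by rewrite l1normN; rewrite mulnSr in bd; lia.
  + by move/eqP: p; rewrite addrC addr_eq0 piZN => /eqP.
  + by rewrite wsqN opprK addrC.
- rewrite !addr0 in p w.
  apply: (deg1_aux (nn := l) hS).
  + by rewrite eta subr0.
  + by rewrite mulnSr in bd; lia.
  + by move/eqP: p; rewrite subr_eq0 => /eqP.
  + by move/eqP: w; rewrite -oppr_eq0 opprB => /eqP.
Qed.
End Main2.

Set Implicit Arguments. Unset Strict Implicit. Unset Printing Implicit Defensive.

Section SS.
Variable m : nat.
Definition sa (a : 'I_m -> nat) : seq 'I_m :=
  flatten [seq nseq (a i) i | i <- index_enum 'I_m].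

Lemma size_sa a : size (sa a) = (\sum_(i < m) a i)%N.
Proof.
rewrite /sa size_flatten sumnE /shape -map_comp big_map.
by apply: eq_bigr => i _ /=; rewrite size_nseq.
Qed.

Lemma big_nseqZ (V : nmodType) (F : 'I_m -> V) k i :
  \sum_(x <- nseq k i) F x = F i *+ k.
Proof. by elim: k => [|k IH]; rewrite ?big_nil // /= big_cons IH mulrS. Qed.

Lemma sum_sa a : \sum_(x <- sa a) unitv x = [ffun j => (a j)%:Z].
Proof.
rewrite /sa big_flatten big_map /=.
apply/ffunP => j; rewrite sum_ffunE ffunE.
rewrite (bigD1 j) //= big_nseqZ ffunMnE unitvE eqxx big1 ?addr0.
  by rewrite natz.
move=> i ne; rewrite big_nseqZ ffunMnE unitvE (negbTE ne).
by rewrite mul0rn.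
Qed.

Definition sgv (p : bool * 'I_m) : mi m := if p.1 then unitv p.2 else - unitv p.2.

Lemma signed_sum_of (q : nat) (s : seq (bool * 'I_m)) (i0 : 'I_m) :
  size s = (2 * q)%N -> signed_sum q (\sum_(p <- s) sgv p).
Proof.
move=> Hs.
apply/existsP; exists [ffun j : 'I_(2 * q) => (nth (true, i0) s j).2].
apply/existsP; exists [ffun j : 'I_(2 * q) => (nth (true, i0) s j).1].
apply/eqP.
under [RHS]eq_bigr do rewrite !ffunE.
rewrite -(big_mkord xpredT (fun j => sgv (nth (true, i0) s j))) -Hs.
by rewrite (big_nth (true, i0)).
Qed.

Lemma signed_sum_ab (q : nat) (a b : 'I_m -> nat) (l : mi m) (i0 : 'I_m) :
  (\sum_i a i + \sum_i b i = 2 * q)%N -> (forall i, l i = (a i)%:Z - (b i)%:Z) ->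
  signed_sum q l.
Proof.
move=> sab lab.
have -> : l = \sum_(p <- [seq (true, x) | x <- sa a] ++ [seq (false, x) | x <- sa b]) sgv p.
  rewrite big_cat !big_map /sgv /= sumrN !sum_sa.
  by apply/ffunP => i; rewrite !ffunE lab.
apply: signed_sum_of i0 _.
by rewrite size_cat !size_map !size_sa.
Qed.
End SS.

Section LPM.
Variable m : nat.
Implicit Types (l : mi m).

Lemma lpm l i : (lplus l i)%:Z - (lminus l i)%:Z = l i.
Proof.
rewrite /lplus /lminus; case: (ltrP (l i) 0) => h.
  by rewrite ltz0_abs // sub0r opprK.
by rewrite gez0_abs // subr0.
Qed.

Lemma lplus_ge l i : l i <= (lplus l i)%:Z.
Proof.
rewrite /lplus; case: (ltrP (l i) 0) => h; first exact: ltW.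
by rewrite gez0_abs.
Qed.

Lemma lplus_le l i (a : nat) : l i <= a%:Z -> (lplus l i <= a)%N.
Proof.
rewrite /lplus; case: (ltrP (l i) 0) => h //.
by rewrite -lez_nat gez0_abs.
Qed.

Lemma lpm_abs l i : (lplus l i + lminus l i)%N = `|l i|%N.
Proof. by rewrite /lplus /lminus; case: (ltrP (l i) 0) => h; rewrite ?addn0 ?add0n. Qed.

Lemma lshift_abs l i (al : nat) : `|(lplus l i + al)%:Z - l i|%N = (al + lminus l i)%N.
Proof.
apply/eqP; rewrite -eqz_nat gez0_abs.
  by rewrite PoszD -(lpm l i); apply/eqP; ring.
rewrite PoszD -(lpm l i).
have -> : (lplus l i)%:Z + al%:Z - ((lplus l i)%:Z - (lminus l i)%:Z) = (al + lminus l i)%N%:Z.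
  by rewrite PoszD; ring.
by [].
Qed.

Lemma etaZ_lpm l : etaZ l = (\sum_i lplus l i)%N%:Z - (\sum_i lminus l i)%N%:Z.
Proof. by rewrite !sumz -sumrB; apply: eq_bigr => i _; rewrite lpm. Qed.

Lemma lplusN l i : lplus (- l) i = lminus l i.
Proof.
rewrite /lplus /lminus ffunE oppr_ge0 abszN.
case: (ltrP (l i) 0) => h; first by rewrite ltW.
by case: (eqVneq (l i) 0) => [->|ne] //; rewrite le_eqVlt (negbTE ne) ltNge h.
Qed.

Lemma lminusN l i : lminus (- l) i = lplus l i.
Proof.
rewrite /lplus /lminus ffunE oppr_lt0 abszN.
case: (ltrP 0 (l i)) => h; first by rewrite ltW.
case: (eqVneq (l i) 0) => [->|ne] //.
by rewrite le_eqVlt eq_sym (negbTE ne) /= ltNge h.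
Qed.
End LPM.

Lemma leq_sum_nat (I : finType) (f : I -> nat) i : (f i <= \sum_j f j)%N.
Proof. by rewrite (bigD1 i) //= leq_addr. Qed.

Set Implicit Arguments. Unset Strict Implicit. Unset Printing Implicit Defensive.

Section Alpha.
Variables (R : rcfType) (n m : nat) (v : 'I_m -> 'rV[int]_n) (xi : 'I_m -> R) (q : nat).

Lemma coefRes_alpha l ea eb yj :
  (0 < size ea)%N -> (size ea <= q.+1)%N ->
  etaZ l = (size eb)%:Z - (size ea)%:Z ->
  piZ v l + \sum_(h <- ea) h - \sum_(k <- eb) k = 0 ->
  wsq v l + \sum_(h <- ea) sqnorm h - \sum_(k <- eb) sqnorm k = 0 ->
  coefRes v xi q l ea eb yj =
  \sum_(al : {ffun 'I_m -> 'I_q.+1} | (\sum_i (al i + lplus l i) == q.+1 - size ea)%N)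
     BD xi q l ea eb yj (fun i => (lplus l i + al i)%N).
Proof.
move=> ea0 eaq eta p w.
rewrite coefResE.
apply: (@reindex_ff _ _ q.+1 q (PR v q l ea eb)
  (fun al => (\sum_i (al i + lplus l i) == q.+1 - size ea)%N)
  (BD xi q l ea eb yj) (fun al => BD xi q l ea eb yj (fun i => (lplus l i + al i)%N))
  (fun al i => (lplus l i + al i)%N) (fun a i => (a i - lplus l i)%N)).
- move=> al /eqP P2 bd; split => //.
  + apply/and5P; split.
    * apply/forallP => i; rewrite PoszD; have := lplus_ge l i; lia.
    * apply/eqP; move: P2; under eq_bigr do rewrite addnC.
      by move=> ->; rewrite subnK.
    *       have -> : \sum_i ((lplus l i + al i)%N%:Z - l i) = (\sum_i al i)%N%:Z + (\sum_i lminus l i)%N%:Z.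
        rewrite !sumz -big_split; apply: eq_bigr => i _ /=.
        by rewrite -(lpm l i) PoszD; ring.
      have e2 : (\sum_i al i + \sum_i lplus l i)%N = (q.+1 - size ea)%N.
        by rewrite -P2 big_split.
      move: eta; rewrite etaZ_lpm => eta'.
      apply/eqP; move: e2 eta'.
      set A := (\sum_i al i)%N; set B := (\sum_i lplus l i)%N; set C := (\sum_i lminus l i)%N.
      clearbody A B C => e1 e2.
      have e2' : B%:Z - C%:Z = (size eb)%:Z - (size ea)%:Z := e2.
      suff : A%:Z + C%:Z + (size eb)%:Z = (q.+1)%:Z by [].
      clear e2; lia.
    * by apply/eqP.
    * by apply/eqP.
  + by apply: functional_extensionality => i; rewrite addKn.
  + move=> i; apply: leq_trans (leq_sum_nat (fun i => (lplus l i + al i)%N) i) _.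
    by under eq_bigr do rewrite addnC; rewrite P2; lia.
- move=> a /and5P [/forallP la /eqP sa _ _ _] bd; split.
  + apply/eqP; rewrite -sa addnK; apply: eq_bigr => i _; rewrite subnK //.
    exact: lplus_le.
  + apply: functional_extensionality => i; rewrite subnKC //; exact: lplus_le.
  + move=> i; apply: leq_trans (leq_subr _ _) _.
    have := leq_sum_nat a i; move: sa ea0; clear; set S := (\sum_j a j)%N.
    set s := size ea; clearbody S s; lia.
Qed.
End Alpha.

Section Mnom.
Variables (R : rcfType) (n m : nat).

Lemma mnomE0 r (a : 'I_m -> nat) : mnomE R r a ([::] : seq 'rV[int]_n) = mnom R r a.
Proof. by rewrite /mnomE /mnom /multfact /= big_nil mulr1. Qed.

Lemma mnomE1 r (a : 'I_m -> nat) (h : 'rV[int]_n) : mnomE R r.+1 a [:: h] = r.+1%:R * mnom R r a.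
Proof.
rewrite /mnomE /mnom /multfact /= big_seq1 /= eqxx /= mulr1 factS natrM.
by rewrite mulrA.
Qed.

Lemma mnomE2 r (a : 'I_m -> nat) (h k : 'rV[int]_n) : h != k ->
  mnomE R r.+2 a [:: h; k] = (r.+2 * r.+1)%:R * mnom R r a.
Proof.
move=> hk.
rewrite /mnomE /mnom /multfact /= inE (negbTE hk) /= big_cons big_seq1 /=.
rewrite eqxx (negbTE hk) eq_sym (negbTE hk) eqxx /= mulr1 mulr1.
by rewrite !factS !natrM !mulrA.
Qed.
End Mnom.

Section BDNone.
Variables (R : rcfType) (n m : nat) (xi : 'I_m -> R) (q : nat).
Hypothesis xipos : forall i, 0 <= xi i.

Lemma BD_None l (ea eb : seq 'rV[int]_n) (al : 'I_m -> nat) :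
  BD xi q l ea eb None (fun i => (lplus l i + al i)%N) =
  mnomE R q.+1 (fun i => (lplus l i + al i)%N) ea *
  mnomE R q.+1 (fun i => (al i + lminus l i)%N) eb *
  (xi_half xi l * \prod_i xi i ^+ al i).
Proof.
rewrite /BD.
have -> : (fun i => `|(lplus l i + al i)%N%:Z - l i|%N) = (fun i => (al i + lminus l i)%N).
  by apply: functional_extensionality => i; rewrite lshift_abs.
congr (_ * _); rewrite /xi_half -big_split /=; apply: eq_bigr => i _.
rewrite -lpm_abs lshift_abs.
have -> : (lplus l i + al i + (al i + lminus l i) = (lplus l i + lminus l i) + 2 * al i)%N.
  by rewrite mul2n -addnn; lia.
by rewrite exprD exprM sqr_sqrtr.
Qed.
End BDNone.

Section Cases.
Variables (R : rcfType) (n q m : nat) (v : 'I_m -> 'rV[int]_n) (xi : 'I_m -> R).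
Hypothesis xipos : forall i, 0 <= xi i.

Lemma res_zzbar l h k : etaZ l = 0 -> piZ v l + h - k = 0 ->
  wsq v l + sqnorm h - sqnorm k = 0 -> coefRes v xi q l [:: h] [:: k] None = c0 xi q l.
Proof.
move=> eta p w.
have p' : piZ v l + \sum_(x <- [:: h]) x - \sum_(x <- [:: k]) x = 0 by rewrite !big_seq1.
have w' : wsq v l + \sum_(x <- [:: h]) sqnorm x - \sum_(x <- [:: k]) sqnorm x = 0.
  by rewrite !big_seq1.
have eta' : etaZ l = (size [:: k])%:Z - (size [:: h])%:Z by rewrite eta.
rewrite (@coefRes_alpha _ _ _ v xi q l [:: h] [:: k] None (erefl _) _ eta' p' w') //.
rewrite /c0 mulr_sumr; apply: eq_big => al; first by rewrite subn1.
move=> _; rewrite BD_None // !mnomE1 natrX.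
have -> : (fun i => (al i + lminus l i)%N) = (fun i => (lminus l i + al i)%N).
  by apply: functional_extensionality => i; rewrite addnC.
ring.
Qed.

Lemma res_zz l h k : h != k -> etaZ l = -2 -> piZ v l + h + k = 0 ->
  wsq v l + sqnorm h + sqnorm k = 0 -> (0 < q)%N ->
  coefRes v xi q l [:: h; k] [::] None = cm2 xi q l.
Proof.
move=> hk eta p w.
have p' : piZ v l + \sum_(x <- [:: h; k]) x - \sum_(x <- [::]) x = 0.
  by rewrite !big_cons !big_nil subr0 addr0 addrA.
have w' : wsq v l + \sum_(x <- [:: h; k]) sqnorm x - \sum_(x <- ([::] : seq 'rV[int]_n)) sqnorm x = 0.
  by rewrite !big_cons !big_nil subr0 addr0 addrA.
have eta' : etaZ l = (size ([::] : seq 'rV[int]_n))%:Z - (size [:: h; k])%:Z by rewrite eta.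
case: q => [//|q'] _.
rewrite (@coefRes_alpha _ _ _ v xi q'.+1 l [:: h; k] [::] None (erefl _) (erefl _) eta' p' w').
rewrite /cm2 mulr_sumr; apply: eq_big => al; first by rewrite /= subSS subSS subn0.
move=> _; rewrite BD_None // mnomE0 mnomE2 //=.
have -> : (fun i => (al i + lminus l i)%N) = (fun i => (lminus l i + al i)%N).
  by apply: functional_extensionality => i; rewrite addnC.
ring.
Qed.
End Cases.

Lemma absz_sub (x : nat) (y : int) : y <= x%:Z -> (`|x%:Z - y|%N)%:Z = x%:Z - y.
Proof. by move=> h; rewrite gez0_abs // subr_ge0. Qed.

Lemma absz_add (x : nat) (y : int) : - y <= x%:Z -> (absz (x%:Z + y))%:Z = x%:Z + y.
Proof. by move=> h; rewrite gez0_abs // -(opprK y) subr_ge0. Qed.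

Lemma sum_absz (I : finType) (F : I -> int) : (forall i, 0 <= F i) ->
  (\sum_i `|F i|%N)%N%:Z = \sum_i F i.
Proof. by move=> H; rewrite sumz; apply: eq_bigr => i _; rewrite gez0_abs. Qed.

Section Sym.
Variables (R : rcfType) (n q m : nat) (v : 'I_m -> 'rV[int]_n) (xi : 'I_m -> R).

Lemma PR_sym l ea eb (g : 'I_m -> nat) : PR v q l ea eb g ->
  [/\ PR v q (- l) eb ea (fun i => `|(g i)%:Z - l i|%N),
      (fun i => absz ((`|(g i)%:Z - l i|%N)%:Z + l i)) = g &
      forall i, (`|(g i)%:Z - l i|%N <= q.+1)%N].
Proof.
case/and5P => /forallP la /eqP sa /eqP sb /eqP p /eqP w.
have e i : (`|(g i)%:Z - l i|%N)%:Z = (g i)%:Z - l i by apply: absz_sub.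
have sb' : (\sum_i `|(g i)%:Z - l i|%N + size eb = q.+1)%N.
  apply/eqP; rewrite -eqz_nat PoszD sumz; apply/eqP; rewrite -sb; congr (_ + _).
  by apply: eq_bigr => i _; rewrite e.
split.
- apply/and5P; split.
  + by apply/forallP => i; rewrite ffunE e -subr_ge0 opprK subrK.
  + by apply/eqP.
  + apply/eqP; rewrite -sa PoszD sumz; congr (_ + _); apply: eq_bigr => i _.
    by rewrite ffunE e opprK subrK.
  + rewrite piZN; apply/eqP.
    transitivity (- (piZ v l + \sum_(h <- ea) h - \sum_(k <- eb) k)); last by rewrite p oppr0.
    by rewrite opprB opprD addrA; congr (_ + _); rewrite addrC.
  + rewrite wsqN; apply/eqP.
    transitivity (- (wsq v l + \sum_(h <- ea) sqnorm h - \sum_(k <- eb) sqnorm k)); last by rewrite w oppr0.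
    ring.
- apply: functional_extensionality => i; apply/eqP; rewrite -eqz_nat.
  rewrite absz_add e ?subrK //.
  by rewrite -subr_ge0 opprK subrK.
- move=> i; rewrite -sb'; exact: leq_trans (leq_sum_nat (fun i => `|(g i)%:Z - l i|%N) i) (leq_addr _ _).
Qed.

Lemma coefRes_sym l ea eb :
  coefRes v xi q l ea eb None = coefRes v xi q (- l) eb ea None.
Proof.
rewrite !coefResE.
apply: (@reindex_ff _ _ q.+1 q.+1 (PR v q l ea eb) (PR v q (- l) eb ea)
  (BD xi q l ea eb None) (BD xi q (- l) eb ea None)
  (fun f i => absz ((f i)%:Z + l i)) (fun g i => `|(g i)%:Z - l i|%N)).
- move=> f Pf _.
  have [P1 hk bd] := PR_sym Pf.
  have ef : (fun i => `|(f i)%:Z - (- l) i|%N) = (fun i => absz ((f i)%:Z + l i)).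
    by apply: functional_extensionality => i; rewrite ffunE opprK.
  rewrite ef opprK in P1.
  have hk' : (fun i => `|(absz ((f i)%:Z + l i)%R)%:Z - l i|%N) = f.
    apply: functional_extensionality => i; have /= := congr1 (fun F => F i) hk.
    by rewrite !ffunE opprK.
  split => //.
    by move=> i; move: (bd i); rewrite ffunE opprK.
  rewrite /BD /= hk' ef [mnomE R q.+1 f eb * _]mulrC; congr (_ * _).
  apply: eq_bigr => i _; have /= -> := congr1 (fun F => F i) hk'.
  by rewrite ffunE opprK addnC.
- move=> g Pg _; have [P2 hk bd] := PR_sym Pg; split => //.
Qed.
End Sym.

Set Implicit Arguments. Unset Strict Implicit. Unset Printing Implicit Defensive.

Section ApolS.
Variables (R : rcfType) (n q m : nat) (v : 'I_m -> 'rV[int]_n) (xi : 'I_m -> R).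
Hypothesis xipos : forall i, 0 < xi i.

Lemma lplus0 i : lplus (0 : mi m) i = 0%N.
Proof. by rewrite /lplus ffunE. Qed.
Lemma lminus0 i : lminus (0 : mi m) i = 0%N.
Proof. by rewrite /lminus ffunE. Qed.

Lemma c0_zero : c0 xi q 0 = (q.+1 ^ 2)%:R * Apol xi q.
Proof.
rewrite /c0 /xi_half big1 ?mulr1; last by move=> i _; rewrite ffunE.
congr (_ * _); apply: eq_big => al.
  by congr (_ == _); apply: eq_bigr => i _; rewrite lplus0 addn0.
move=> _; rewrite expr2; congr (_ * _ * _).
  by congr (mnom _ _); apply: functional_extensionality => i; rewrite lplus0.
by congr (mnom _ _); apply: functional_extensionality => i; rewrite lminus0.
Qed.

Lemma res_Some j : coefRes v xi q 0 [::] [::] (Some j) = dApol xi q.+1 j.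
Proof.
rewrite coefResE /dApol /Apol_in raddf_sum horner_sum.
apply: eq_big => a.
  rewrite /PR piZ0 wsq0 !big_nil !addr0 !subr0 eqxx !andbT /=.
  have -> : [forall i, (0 : mi m) i <= (a i)%:Z] by apply/forallP => i; rewrite ffunE.
  rewrite addn0 /=.
  have -> : \sum_i ((a i)%:Z - (0 : mi m) i) = (\sum_i a i)%N%:Z.
    by rewrite sumz; apply: eq_bigr => i _; rewrite ffunE subr0.
  by rewrite eqz_nat andbb.
move=> _.
rewrite /BD /=.
have -> : (fun i => `|(a i)%:Z - ((0 : mi m) i)%R|%N) = (fun i => nat_of_ord (a i)).
  by apply: functional_extensionality => i; rewrite ffunE subr0.
rewrite !mnomE0 derivZ hornerZ -expr2 -mulrA; congr (_ * _).
under eq_bigr do rewrite ffunE subr0 absz_nat addnn -mul2n exprM sqr_sqrtr ?ltW //.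
rewrite ffunE subr0 absz_nat addnn -mul2n.
rewrite deriv_mulC hornerCM derivXn hornerMn hornerXn (bigD1 j) //=.
have xj0 : xi j != 0 by rewrite gt_eqF.
case: (a j : nat) => [|k] /=.
  by rewrite muln0 mul0r mul0r mulr0n mulr0.
have -> : (2 * k.+1)%:R / 2 = k.+1%:R :> R.
  by rewrite natrM mulrAC divff ?pnatr_eq0 // mul1r.
rewrite -mulr_natr exprS.
by field.
Qed.

End ApolS.

Set Implicit Arguments. Unset Strict Implicit. Unset Printing Implicit Defensive.

Section Vec.
Variable n : nat.
Implicit Types x y : 'rV[int]_n.

Lemma sqnorm_eq0 x : sqnorm x = 0 -> x = 0.
Proof.
rewrite /sqnorm => /psumr_eq0P H.
apply/matrixP => i j; rewrite ord1 mxE.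
have := H (fun i _ => sqr_ge0 _) j isT; move/eqP; rewrite sqrf_eq0 => /eqP //.
Qed.

Lemma sqnorm_para x y : sqnorm (x - y) + sqnorm (x + y) = 2 * (sqnorm x + sqnorm y).
Proof.
rewrite /sqnorm -!big_split mulr_sumr; apply: eq_bigr => j _ /=.
by rewrite !mxE; ring.
Qed.

Lemma sqnorm2 x : sqnorm (x + x) = 4 * sqnorm x.
Proof.
by rewrite /sqnorm mulr_sumr; apply: eq_bigr => j _ /=; rewrite !mxE; ring.
Qed.

Lemma double_inj x y : x + x = y + y -> x = y.
Proof.
move=> e; apply/matrixP => i j; have := congr1 (fun M : 'rV[int]_n => M i j) e.
rewrite !mxE => e'; apply/eqP; rewrite -subr_eq0.
have : (x i j - y i j) * 2 == 0 by rewrite mulrBl !mulr_natr !mulr2n e' subrr.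
by rewrite mulf_eq0 => /orP [].
Qed.
End Vec.

Section Lin.
Variables (n m : nat) (v : 'I_m -> 'rV[int]_n).

Lemma wsqD l1 l2 : wsq v (l1 + l2) = wsq v l1 + wsq v l2.
Proof. by rewrite /wsq -big_split; apply: eq_bigr => i _; rewrite ffunE mulrDl. Qed.

Lemma etaZD (l1 l2 : mi m) : etaZ (l1 + l2) = etaZ l1 + etaZ l2.
Proof. by rewrite /etaZ -big_split; apply: eq_bigr => i _; rewrite ffunE. Qed.

Lemma wsq_unit i : wsq v (unitv i) = sqnorm (v i).
Proof.
rewrite /wsq (bigD1 i) //= unitvE eqxx mul1r big1 ?addr0 // => j ne.
by rewrite unitvE eq_sym (negbTE ne) mul0r.
Qed.

Lemma etaZ_unit (i : 'I_m) : etaZ (unitv i) = 1.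
Proof.
rewrite /etaZ (bigD1 i) //= unitvE eqxx big1 ?addr0 // => j ne.
by rewrite unitvE eq_sym (negbTE ne).
Qed.

Lemma etaZ_m2 (i : 'I_m) : etaZ (- (unitv i *+ 2)) = -2.
Proof. by rewrite etaZN mulr2n etaZD etaZ_unit. Qed.
End Lin.

Lemma etaZ0 m : etaZ (0 : mi m) = 0.
Proof. by rewrite /etaZ big1 // => i _; rewrite ffunE. Qed.

Section Final.
Variables (R : rcfType) (n q m : nat) (v : 'I_m -> 'rV[int]_n) (xi : 'I_m -> R).
Hypothesis q0 : (0 < q)%N.
Hypothesis m0 : (0 < m)%N.
Hypothesis xipos : forall i, 0 < xi i.
Hypothesis H4 : forall l : mi m, Xqm2 q l -> 2 * wsq v l + sqnorm (piZ v l) <> 0.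

Lemma PR_signed l ea eb a : PR v q l ea eb a -> (size ea + size eb = 2)%N -> signed_sum q l.
Proof.
move=> Pa sz; move: (Pa); case/and5P => /forallP la /eqP sa /eqP sb _ _.
have e i : (`|(a i)%:Z - l i|%N)%:Z = (a i)%:Z - l i by apply: absz_sub.
have sb' : (\sum_i `|(a i)%:Z - l i|%N + size eb = q.+1)%N.
  apply/eqP; rewrite -eqz_nat PoszD sumz; apply/eqP; rewrite -sb; congr (_ + _).
  by apply: eq_bigr => i _; rewrite e.
apply: (@signed_sum_ab _ q a (fun i => `|(a i)%:Z - l i|%N) l (Ordinal m0)).
  move: sa sb' sz; set s1 := size ea; set s2 := size eb.
  set A := (\sum_i a i)%N; set B := (\sum_i _)%N; clearbody s1 s2 A B; lia.
by move=> i; rewrite e opprB addrC subrK.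
Qed.

Lemma coefRes_zzbar_full l h k : inSc v h -> inSc v k ->
  coefRes v xi q l [:: h] [:: k] None =
  (if (l == 0) && (h == k) then (q.+1 ^ 2)%:R * Apol xi q else 0)
  + (if Xq0 q l && P0 v l h k then c0 xi q l else 0).
Proof.
have xi0 i : 0 <= xi i by apply: ltW.
move=> hS kS.
case: (boolP (Xq0 q l && P0 v l h k)) => [/andP [/andP [Xl /eqP e0] /andP [/eqP p /eqP w]] | nXP].
  have l0 : l != 0 by case/and4P: Xl.
  by rewrite (negbTE l0) add0r (res_zzbar q xi0 e0 p w).
rewrite addr0; case: (eqVneq l 0) => [-> | l0].
  case: (eqVneq h k) => [<- | hk] /=.
    rewrite (res_zzbar q xi0 (etaZ0 _)) ?c0_zero //.
      by rewrite piZ0 add0r subrr.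
    by rewrite wsq0 add0r subrr.
  apply: coefRes0 => a /PR_facts [_ _ p _]; move: p.
  rewrite !big_seq1 piZ0 add0r => /eqP; rewrite subr_eq0 => /eqP e.
  by move: hk; rewrite e eqxx.
rewrite /=; apply: coefRes0 => a Pa; apply: (negP nXP).
have [eta _ p w] := PR_facts Pa.
rewrite !big_seq1 in p w; rewrite /= subrr in eta.
rewrite /Xq0 /Xq /P0 p w eta !eqxx l0 (PR_signed Pa) //= !andbT.
by apply/forallP => i; apply/eqP => e; move: eta; rewrite e etaZ_m2.
Qed.

Lemma coefRes_zz_full l h k : inSc v h -> inSc v k ->
  coefRes v xi q l [:: h; k] [::] None =
  if Xqm2 q l && Pm2 v l h k then cm2 xi q l else 0.
Proof.
have xi0 i : 0 <= xi i by apply: ltW.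
move=> hS kS.
case: (boolP (Xqm2 q l && Pm2 v l h k)) => [/andP [XX /andP [/eqP p /eqP w]] | nXP].
  have hk : h != k.
    apply/eqP => ehk; apply: (H4 XX); move: p w; rewrite -ehk => p w.
    have -> : piZ v l = - (h + h) by apply/eqP; rewrite -addr_eq0 addrA ?p ?w.
    have -> : wsq v l = - (sqnorm h + sqnorm h) by apply/eqP; rewrite -addr_eq0 addrA ?p ?w.
    rewrite sqnormN sqnorm2; ring.
  move: XX => /andP [_ /eqP e2].
  exact: (res_zz xi0 hk e2 p w q0).
apply: coefRes0 => a Pa; apply: (negP nXP).
have [eta _ p w] := PR_facts Pa.
rewrite !big_cons !big_nil /= in p w eta.
rewrite !subr0 !addr0 !addrA in p w.
have eta2 : etaZ l = -2 by rewrite eta.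
rewrite /Xqm2 /Xq /Pm2 p w eta2 !eqxx (PR_signed Pa) //= !andbT.
apply/andP; split.
  by apply/eqP => l0; move: eta2; rewrite l0 etaZ0.
apply/forallP => i; apply/eqP => el.
have pl : piZ v l = - (v i + v i) by rewrite el piZN mulr2n piZD piZ_unit.
have wl : wsq v l = - (sqnorm (v i) + sqnorm (v i)) by rewrite el wsqN mulr2n wsqD wsq_unit.
have hkv : h + k = v i + v i.
  by move/eqP: p; rewrite pl -addrA addrC addr_eq0 opprK => /eqP.
have sq : sqnorm h + sqnorm k = sqnorm (v i) + sqnorm (v i).
  by move/eqP: w; rewrite wl -addrA addrC addr_eq0 opprK => /eqP.
have := sqnorm_para h k; rewrite hkv sq sqnorm2 => e.
have ehk : h - k = 0 by apply: sqnorm_eq0; move: e; set s := sqnorm (v i); set t := sqnorm _; lia.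
move/eqP: ehk; rewrite subr_eq0 => /eqP ehk.
move: hkv; rewrite ehk => /double_inj; case: kS => _ /(_ i); done.
Qed.
End Final.


Unset Implicit Arguments.

Theorem mainTheorem5 (R : rcfType) (n q m : nat)
    (v : 'I_m -> 'rV[int]_n) (xi : 'I_m -> R) :
  (0 < n)%N -> (0 < q)%N -> (0 < m)%N ->
  injective v ->
  (forall i, 0 < xi i) ->
  (* (1) *)
  (forall nn : mi m, etaZ nn = 0 -> (1 < l1norm nn <= 2 * q + 2)%N ->
     piZ v nn <> 0) ->
  (* (2) *)
  (forall nn : mi m, etaZ nn = 1 -> (1 < l1norm nn <= 2 * q + 1)%N ->
     sqnorm (piZ v nn) - wsq v nn <> 0) ->
  (* (3) *)
  (forall u : mi m,
     (Xq q u \/ exists l1 l2 : mi m, [/\ Xq q l1, Xq q l2, l1 <> l2 &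
                                       u = l1 + l2 \/ u = l1 - l2]) ->
     piZ v u <> 0) ->
  (* (4) *)
  (forall l : mi m, Xqm2 q l -> 2 * wsq v l + sqnorm (piZ v l) <> 0) ->
  (* degree 0: only the mode-0 constant const(xi) survives *)
      (forall l : mi m, l <> 0 -> coefH v xi q l [::] [::] None = 0) /\
      (* y_j e^{i(l,x)} *)
      (forall (l : mi m) (j : 'I_m),
         coefH v xi q l [::] [::] (Some j) =
         if l == 0 then (q.+1 ^ 2)%:R * Apol xi q + omega v xi q j else 0) /\
      (* degree exactly 1 in w vanishes *)
      (forall (l : mi m) h, inSc v h ->
         coefH v xi q l [:: h] [::] None = 0 /\
         coefH v xi q l [::] [:: h] None = 0) /\
      (* z_h zbar_k e^{i(l,x)} *)
      (forall (l : mi m) h k, inSc v h -> inSc v k ->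
         coefH v xi q l [:: h] [:: k] None =
         (if (l == 0) && (h == k)
          then (q.+1 ^ 2)%:R * Apol xi q + (sqnorm h)%:~R else 0)
         + (if Xq0 q l && P0 v l h k then c0 xi q l else 0)) /\
      (* z_h z_k e^{i(l,x)} *)
      (forall (l : mi m) h k, inSc v h -> inSc v k ->
         coefH v xi q l [:: h; k] [::] None =
         if Xqm2 q l && Pm2 v l h k then cm2 xi q l else 0) /\
      (* zbar_h zbar_k e^{i(l,x)} *)
      (forall (l : mi m) h k, inSc v h -> inSc v k ->
         coefH v xi q l [::] [:: h; k] None =
         if Xqm2 q (- l) && Pm2 v (- l) h k then cm2 xi q (- l) else 0).
Proof.
move=> n0 q0 m0 vinj xipos H1 H2 H3 H4.
have xi0 : forall i, 0 <= xi i by move=> i; apply: ltW.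
split; [|split; [|split; [|split; [|split]]]].
- move=> l l0; rewrite /coefH /coefQuad.
  have /negbTE -> : l != 0 by apply/eqP.
  by rewrite add0r res_empty00.
- move=> l j; rewrite /coefH /coefQuad; case: eqVneq => [->|l0].
    rewrite res_Some // /omega; ring.
  by rewrite add0r res_empty00 //; apply/eqP.
- move=> l h hS; have [e1 e2] := res_deg1 xi H2 l None hS.
  by rewrite /coefH /coefQuad e1 e2; case: (l == 0); rewrite addr0.
- move=> l h k hS kS; rewrite /coefH coefRes_zzbar_full // /coefQuad.
  by case: (l == 0); case: (h == k) => /=; ring.
- move=> l h k hS kS; rewrite /coefH coefRes_zz_full // /coefQuad.
  by case: (l == 0); rewrite add0r.
- move=> l h k hS kS; rewrite /coefH coefRes_sym coefRes_zz_full // /coefQuad.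
  by case: (l == 0); rewrite add0r.
Qed.
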